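(* Let $d \geq 3$ and let $C \subset \mathbb{R}^d$ be a smooth $d$-dimensional combinatorial cube with faces labeled $F_I^J$ via a fixed face-poset isomorphism with $[0,1]^d$. Suppose that every smooth combinatorial cube of dimension smaller than $d$ has two parallel facets. Fix $x,y \in \{1,\dots,d\}$ with $x\neq y$, and suppose that the four $(d-2)$-dimensional faces $F_{xy}, F_{x\bar y}, F_{\bar x y}, F_{\bar x\bar y}$ are all parallel to one another. Then either $F_x$ and $F_{\bar x}$ are parallel, or $F_y$ and $F_{\bar y}$ are parallel.
   Context: A lattice polytope is the convex hull of finitely many points of $\mathbb{Z}^n$. An $n$-dimensional polytope is simple if each vertex lies in exactly $n$ edges; the primitive edge directions at a vertex are the smallest lattice vectors along its incident edges; an $n$-dimensional lattice polytope in $\mathbb{R}^n$ is smooth if it is simple and at every vertex the primitive edge directions form a basis of $\mathbb{Z}^n$. An $n$-dimensional combinatorial cube is a polytope whose face poset is isomorphic to that of $[0,1]^n$. For disjoint $I,J \subseteq \{1,\dots,d\}$ the face of $[0,1]^d$ given by $x_k=0$ for $k\in I$ and $x_k = 1$ for $k \in J$ is denoted $F_I^J$, and the corresponding face of $C$ is also denoted $F_I^J$. Elements of $J$ are written with a bar and elements of $I$ without, e.g. $F_{x\bar y} = F_{\{x\}}^{\{y\}}$, $F_{\bar x} = F_\emptyset^{\{x\}}$, $F_x = F_{\{x\}}^\emptyset$. Two faces $F,G$ are parallel if $\mathrm{lin}(F)=\mathrm{lin}(G)$, where $\mathrm{lin}(F)$ is the linear subspace parallel to the affine hull of $F$. 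*)

(* Defs.v *)
From HB Require Import structures.
From mathcomp Require Import all_boot all_order all_algebra.
From mathcomp Require Import boolp classical_sets reals.
Set Implicit Arguments. Unset Strict Implicit. Unset Printing Implicit Defensive.
Import Order.TTheory GRing.Theory Num.Theory.
Local Open Scope ring_scope.
Local Open Scope classical_set_scope.

Section Polytopes.
Variables (R : realType) (d : nat).
Implicit Types (P F G E : set 'rV[R]_d) (u v w : 'rV[R]_d).

Definition dotv (a x : 'rV[R]_d) : R := \sum_(i < d) a 0 i * x 0 i.

Definition int_vec u : Prop := forall i, u 0 i \is a Num.int.

Definition conv (s : seq 'rV[R]_d) : set 'rV[R]_d :=
  [set x | exists c : 'I_(size s) -> R,
     (forall i, 0 <= c i) /\ \sum_i c i = 1 /\
     x = \sum_(i < size s) c i *: s`_i].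

Definition lattice_polytope P : Prop :=
  exists s : seq 'rV[R]_d, (forall v, v \in s -> int_vec v) /\ P = conv s.

(* F is a face of P: intersection of P with a supporting hyperplane
   (a = 0 allowed, giving P itself and the empty face) *)
Definition face P F : Prop :=
  exists (a : 'rV[R]_d) (b : R),
    (forall x, P x -> dotv a x <= b) /\ F = P `&` [set x | dotv a x = b].

Definition full_dim P : Prop :=
  forall (a : 'rV[R]_d) (b : R), (forall x, P x -> dotv a x = b) -> a = 0.

Definition vertex P v : Prop := face P [set v].

Definition edge P E : Prop :=
  face P E /\ exists v w, v <> w /\ E = conv [:: v; w].

(* u is the primitive edge direction of the edge E at its endpoint v:
   the smallest lattice vector along E pointing away from v *)
Definition prim_dir v E u : Prop :=
  exists w, w <> v /\ E = conv [:: v; w] /\ int_vec u /\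
    exists t : R, 0 < t /\ u = t *: (w - v) /\
      (forall s : R, 0 < s -> int_vec (s *: (w - v)) -> t <= s).

Definition Zbasis (M : 'M[R]_d) : Prop :=
  forall z : 'rV[R]_d, int_vec z ->
    exists c : 'rV[R]_d, int_vec c /\ z = c *m M /\
      (forall c', int_vec c' -> z = c' *m M -> c' = c).

(* smooth d-dimensional lattice polytope in R^d: simple (each vertex on
   exactly d edges, enumerated bijectively by e) and the primitive edge
   directions at each vertex form a basis of Z^d *)
Definition smooth P : Prop :=
  lattice_polytope P /\ full_dim P /\
  forall v, vertex P v ->
    exists (e : 'I_d -> set 'rV[R]_d) (M : 'M[R]_d),
      injective e /\
      (forall i, edge P (e i) /\ e i v /\ prim_dir v (e i) (row i M)) /\
      (forall E, edge P E -> E v -> exists i, E = e i) /\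
      Zbasis M.

(* L labels the faces of P via a face-poset isomorphism with [0,1]^d:
   L I J is the face corresponding to F_I^J = {x_k = 0 (k in I), x_k = 1 (k in J)},
   for disjoint I, J; the empty face corresponds to the empty face. *)
Definition cube_labeling P (L : {set 'I_d} -> {set 'I_d} -> set 'rV[R]_d) : Prop :=
  (forall I J : {set 'I_d}, [disjoint I & J]%bool -> face P (L I J) /\ L I J !=set0) /\
  (forall F, face P F -> F !=set0 ->
     exists I J : {set 'I_d}, [disjoint I & J]%bool /\ F = L I J) /\
  (forall I J I' J' : {set 'I_d}, [disjoint I & J]%bool -> [disjoint I' & J']%bool ->
     (L I J `<=` L I' J' <-> (I' \subset I) /\ (J' \subset J))).

Definition comb_cube P : Prop := exists L, cube_labeling P L.

Definition facet P F : Prop :=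
  face P F /\ F <> P /\ F !=set0 /\
  (forall G, face P G -> F `<=` G -> G = F \/ G = P).

Definition lin F : set 'rV[R]_d :=
  [set v | exists (n : nat) (c : 'I_n -> R) (p q : 'I_n -> 'rV[R]_d),
     (forall i, F (p i) /\ F (q i)) /\ v = \sum_(i < n) c i *: (p i - q i)].

Definition parallel F G : Prop := lin F = lin G.

End Polytopes.

(* Main.v *)
Require Import Defs.
From HB Require Import structures.
From mathcomp Require Import all_boot all_order all_algebra.
From mathcomp Require Import boolp classical_sets reals.
Local Open Scope ring_scope.
From HB Require Import structures.
From mathcomp Require Import all_boot all_order all_algebra.
From mathcomp Require Import boolp classical_sets reals.
From mathcomp Require Import ring lra.
Set Implicit Arguments. Unset Strict Implicit. Unset Printing Implicit Defensive.
Import Order.TTheory GRing.Theory Num.Theory.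
Local Open Scope ring_scope.
Local Open Scope classical_set_scope.

Section Basics.
Variables (R : realType) (d : nat).
Local Notation V := 'rV[R]_d.

Lemma dotvD (a u v : V) : dotv a (u + v) = dotv a u + dotv a v.
Proof. by rewrite /dotv -big_split; apply: eq_bigr => i _; rewrite mxE mulrDr. Qed.
Lemma dotv0 (a : V) : dotv a 0 = 0.
Proof. by rewrite /dotv big1 // => i _; rewrite mxE mulr0. Qed.
Lemma dotvZ (a u : V) c : dotv a (c *: u) = c * dotv a u.
Proof. by rewrite /dotv mulr_sumr; apply: eq_bigr => i _; rewrite mxE mulrCA. Qed.
Lemma dotvN (a u : V) : dotv a (- u) = - dotv a u.
Proof. by rewrite -scaleN1r dotvZ mulN1r. Qed.
Lemma dotvB (a u v : V) : dotv a (u - v) = dotv a u - dotv a v.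
Proof. by rewrite dotvD dotvN. Qed.
Lemma dotv_sum (a : V) n (f : 'I_n -> V) :
  dotv a (\sum_i f i) = \sum_i dotv a (f i).
Proof. exact: (big_morph (dotv a) (dotvD a) (dotv0 a)). Qed.
Lemma dotv_unit (k : 'I_d) (u : V) : dotv (delta_mx 0 k) u = u 0 k.
Proof.
rewrite /dotv (bigD1 k) //= big1 ?addr0; first by rewrite mxE !eqxx mul1r.
by move=> i /negPf ik; rewrite mxE ik andbF mul0r.
Qed.

Lemma dotvDl (a a' u : V) : dotv (a + a') u = dotv a u + dotv a' u.
Proof. by rewrite /dotv -big_split; apply: eq_bigr => i _; rewrite mxE mulrDl. Qed.
Lemma dotvZl (a u : V) c : dotv (c *: a) u = c * dotv a u.
Proof. by rewrite /dotv mulr_sumr; apply: eq_bigr => i _; rewrite mxE mulrA. Qed.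

Lemma conv_decomp (s : seq V) z : conv s z ->
  exists c : 'I_(size s) -> R, (forall i, 0 <= c i) /\ \sum_i c i = 1 /\
   forall (a : V) b, dotv a z - b = \sum_i c i * (dotv a s`_i - b).
Proof.
rewrite /conv /=; case=> c [c0 [c1 ->]]; exists c; split => //; split => // a b.
have -> : \sum_i c i * (dotv a s`_i - b) = \sum_i c i * dotv a s`_i - (\sum_i c i) * b.
  by rewrite mulr_suml -sumrB; apply: eq_bigr => i _; rewrite mulrBr.
by rewrite c1 mul1r dotv_sum; congr (_ - _); apply: eq_bigr => i _; rewrite dotvZ.
Qed.

Lemma conv_mem (s : seq V) (i : 'I_(size s)) : conv s s`_i.
Proof.
exists (fun j => (j == i)%:R); split; first by move=> j; rewrite ler0n.
split; first by rewrite (bigD1 i) //= big1 ?addr0 ?eqxx // => j /negPf ->.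
rewrite (bigD1 i) //= big1 ?addr0 ?eqxx ?scale1r // => j /negPf ->.
by rewrite scale0r.
Qed.

Lemma conv2P (v w z : V) :
  conv [:: v; w] z <-> exists t : R, 0 <= t <= 1 /\ z = v + t *: (w - v).
Proof.
split.
  rewrite /conv /=; case=> c [c0 [c1 ->]]; exists (c ord_max); split.
    rewrite c0 /= -c1 big_ord_recr /= lerDr; exact: sumr_ge0.
  move: c1; rewrite !big_ord_recr /= !big_ord0 !add0r => c1.
  set a0 := c _ in c1 *; set a1 := c _ in c1 *.
  have -> : a0 = 1 - a1 by rewrite -c1 addrK.
  by apply/rowP => k; rewrite !mxE; ring.
case=> t [/andP [t0 t1] ->].
exists (fun i : 'I_2 => if i == ord0 then 1 - t else t); split.
  by case=> [[|[|]]] //= _; rewrite ?subr_ge0.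
rewrite !big_ord_recr /= !big_ord0 !add0r; split; first by rewrite subrK.
by apply/rowP => k; rewrite !mxE; ring.
Qed.


Lemma subface (s : seq V) (F : set V) (l : V) : face (conv s) F -> F !=set0 ->
  exists F', face (conv s) F' /\ F' !=set0 /\ F' `<=` F /\
    (forall p q, F p -> F' q -> dotv l p <= dotv l q).
Proof.
case=> a [b [Hab ->]] [x0 [Cx0 ax0]].
pose S (i : 'I_(size s)) := dotv a s`_i == b.
have Hle (i : 'I_(size s)) : dotv a s`_i - b <= 0 by rewrite subr_le0; apply: Hab; apply: conv_mem.
have [i0 Si0] : exists i, S i.
  case: (pickP S) => [i Si | HS]; first by exists i.
  case: (conv_decomp Cx0) => c [c0 [c1 Hc]].
  have := Hc a b; rewrite /= in ax0; rewrite ax0 subrr => /esym H0.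
  have H1 : forall i, c i * (dotv a s`_i - b) = 0.
    move=> i; apply: oppr_inj; rewrite oppr0.
    apply: (@psumr_eq0P _ _ xpredT (fun i => - (c i * (dotv a s`_i - b)))) => //.
      by move=> j _; rewrite oppr_ge0 mulr_ge0_le0.
    by rewrite sumrN H0 oppr0.
  have : \sum_i c i = 0.
    apply: big1 => i _; have := H1 i; move/eqP; rewrite mulf_eq0 => /orP [/eqP //|].
    by rewrite subr_eq0 -/(S i) HS.
  by rewrite c1 => /eqP; rewrite oner_eq0.
case: (arg_maxP (fun i : 'I_(size s) => dotv l s`_i) Si0) => im Sim Hmax.
set M := dotv l s`_im.
have bpos (i : 'I_(size s)) : ~~ S i -> 0 < b - dotv a s`_i.
  move=> nS; rewrite lt_neqAle subr_ge0 -subr_le0 Hle andbT eq_sym subr_eq0.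
  by rewrite eq_sym.
pose lam := \sum_(i | ~~ S i) `|dotv l s`_i - M + 1| / (b - dotv a s`_i).
have Hlam (i : 'I_(size s)) : ~~ S i -> dotv l s`_i - M + 1 <= lam * (b - dotv a s`_i).
  move=> nS; have bp := bpos i nS.
  have : `|dotv l s`_i - M + 1| / (b - dotv a s`_i) <= lam.
    rewrite /lam (bigD1 i) //= lerDl; apply: sumr_ge0 => j /andP [nSj _].
    by rewrite divr_ge0 // ltW // bpos.
  rewrite ler_pdivrMr // => H; apply: le_trans H; exact: ler_norm.
pose a' := lam *: a + l; pose b' := lam * b + M.
have Ha' z : dotv a' z - b' = lam * (dotv a z - b) + (dotv l z - M).
  by rewrite dotvDl dotvZl /b'; ring.
have Hi (i : 'I_(size s)) : dotv a' s`_i - b' <= 0.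
  rewrite Ha'; case Si: (S i).
    by have /= := Hmax i Si; move/eqP: Si => ->; rewrite subrr mulr0 add0r subr_le0.
  have := Hlam i (negbT Si); lra.
have Hi' (i : 'I_(size s)) : ~~ S i -> dotv a' s`_i - b' <= -1.
  move=> nS; rewrite Ha'; have := Hlam i nS; lra.
have HF z : conv s z -> dotv a' z <= b'.
  case/conv_decomp=> c [c0 [c1 Hc]]; rewrite -subr_le0 Hc.
  by apply: sumr_le0 => i _; apply: mulr_ge0_le0.
exists (conv s `&` [set z | dotv a' z = b']); split.
  by exists a', b'; split.
split.
  exists s`_im; split; first exact: conv_mem.
  by apply/eqP; rewrite /= -subr_eq0 Ha' (eqP Sim) !subrr mulr0 addr0.
have Hsub : conv s `&` [set z | dotv a' z = b'] `<=` conv s `&` [set x | dotv a x = b].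
  move=> z [Cz /= az]; split => //=.
  case: (conv_decomp Cz) => c [c0 [c1 Hc]].
  have H0 : \sum_i c i * (dotv a' s`_i - b') = 0 by rewrite -Hc az subrr.
  have H1 : forall i, c i * (dotv a' s`_i - b') = 0.
    move=> i; apply: oppr_inj; rewrite oppr0.
    apply: (@psumr_eq0P _ _ xpredT (fun i => - (c i * (dotv a' s`_i - b')))) => //.
      by move=> j _; rewrite oppr_ge0 mulr_ge0_le0.
    by rewrite sumrN H0 oppr0.
  apply/eqP; rewrite -subr_eq0 Hc; apply/eqP; apply: big1 => i _.
  case Si: (S i); first by move/eqP: Si => ->; rewrite subrr mulr0.
  have := H1 i; move/eqP; rewrite mulf_eq0 => /orP [/eqP -> | ]; first by rewrite mul0r.
  by have := Hi' i (negbT Si) => H /eqP H'; move: H; rewrite H'; lra.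
split => // p q [Cp /= ap] Fq.
have [_ /= aq] := Hsub _ Fq; case: Fq => _ /= a'q.
have := HF p Cp; rewrite -subr_le0 Ha' ap subrr mulr0 add0r subr_le0 => lp.
have := a'q; move/eqP; rewrite -subr_eq0 Ha' aq subrr mulr0 add0r subr_eq0 => /eqP ->.
exact: lp.
Qed.

Lemma conv2_v (v w : V) : conv [:: v; w] v.
Proof. by apply/conv2P; exists 0; rewrite lexx ler01 scale0r addr0. Qed.
Lemma conv2_w (v w : V) : conv [:: v; w] w.
Proof. by apply/conv2P; exists 1; rewrite ler01 lexx scale1r addrC subrK. Qed.

Lemma seg_face (P G : set V) (v w : V) : face P G -> G !=set0 ->
  G `<=` conv [:: v; w] -> conv [:: v; w] `<=` P ->
  G = [set v] \/ G = [set w] \/ G = conv [:: v; w].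
Proof.
case=> a [b [Hab ->]] [z0 Gz0] sG sP.
have av := Hab _ (sP _ (conv2_v v w)); have aw := Hab _ (sP _ (conv2_w v w)).
have az t : dotv a (v + t *: (w - v)) = dotv a v + t * (dotv a w - dotv a v).
  by rewrite dotvD dotvZ dotvB.
case: (eqVneq (dotv a v) b) => ea; case: (eqVneq (dotv a w) b) => eb.
- right; right; apply/seteqP; split; first exact: sG.
  move=> z Cz; split; first exact: sP.
  by case/conv2P: Cz => t [_ ->] /=; rewrite az ea eb subrr mulr0 addr0.
- left; apply/seteqP; split => z /=.
    move=> Gz; case/conv2P: (sG _ Gz) => t [_ Ez]; case: Gz => _ /=.
    rewrite Ez az ea => H.
    have : t * (dotv a w - b) = 0 by apply: (addrI b); rewrite addr0.
    move/eqP; rewrite mulf_eq0 subr_eq0 (negPf eb) orbF => /eqP ->.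
    by rewrite scale0r addr0.
  by move=> ->; split => //; exact: sP (conv2_v v w).
- right; left; apply/seteqP; split => z /=.
    move=> Gz; case/conv2P: (sG _ Gz) => t [_ Ez]; case: Gz => _ /=.
    rewrite Ez az eb => H.
    have ht : t = 1.
      have : (t - 1) * (b - dotv a v) = 0.
        transitivity (dotv a v + t * (b - dotv a v) - b); first ring.
        by rewrite H subrr.
      move/eqP; rewrite mulf_eq0 !subr_eq0 [b == _]eq_sym (negPf ea) orbF.
      by move/eqP.
    by rewrite ht scale1r addrC subrK.
  by move=> ->; split => //; exact: sP (conv2_w v w).
- exfalso; case/conv2P: (sG _ Gz0) => t [/andP [t0 t1] Ez]; case: Gz0 => _ /=.
  rewrite Ez az => H.
  have la : dotv a v < b by rewrite lt_neqAle ea av.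
  have lb : dotv a w < b by rewrite lt_neqAle eb aw.
  have p1 : 0 <= (1 - t) * (b - dotv a v) by apply: mulr_ge0; rewrite subr_ge0 // ltW.
  have p2 : 0 <= t * (b - dotv a w) by apply: mulr_ge0; rewrite // subr_ge0 ltW.
  have E : (1 - t) * (b - dotv a v) + t * (b - dotv a w) = 0.
    transitivity (b - (dotv a v + t * (dotv a w - dotv a v))); first ring.
    by rewrite H subrr.
  case: (eqVneq t 0) => [t00|tn0].
    by move: H; rewrite t00 mul0r addr0 => H; move: la; rewrite H ltxx.
  have p3 : 0 < t * (b - dotv a w) by rewrite mulr_gt0 ?subr_gt0 // lt_neqAle eq_sym tn0.
  lra.
Qed.

Lemma Zbasis_unit (M : 'M[R]_d) : Zbasis M ->
  M \in unitmx /\ (forall i j, invmx M i j \is a Num.int).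
Proof.
move=> Zb.
have H i : exists c : V, int_vec c /\ delta_mx 0 i = c *m M.
  have zi : int_vec (delta_mx 0 i : V) by move=> j; rewrite mxE natr_int.
  by have [c [ci [E _]]] := Zb _ zi; exists c.
have [f Hf] := choice H.
pose N := \matrix_i f i.
have NM : N *m M = 1%:M.
  apply/row_matrixP => i; rewrite row_mul rowK row1.
  by have [_ <-] := Hf i.
have [Nu Mu] := mulmx1_unit NM; split => //.
have -> : invmx M = N by rewrite -[invmx M]mul1mx -NM -mulmxA mulmxV // mulmx1.
by move=> i j; rewrite mxE; have [fi _] := Hf i; apply: fi.
Qed.

End Basics.

Lemma disjP (T : finType) (A B : {set T}) :
  reflect (forall x, x \in A -> x \notin B) [disjoint A & B].
Proof.
apply: (iffP idP) => [H x xA | H]; first by rewrite (disjointFr H xA).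
by rewrite disjoint_subset; apply/fintype.subsetP => x xA; rewrite inE /= H.
Qed.

Section Helpers.
Variables (R : realType) (d : nat).
Local Notation V := 'rV[R]_d.

Lemma single_eq (p q : V) : [set p] = [set q] -> p = q.
Proof. move=> E; have h : [set q] p by rewrite -E. exact: h. Qed.

Lemma coord_row (M : 'M[R]_d) : M \in unitmx -> forall j i,
  (row j M *m invmx M) 0 i = (j == i)%:R.
Proof. by move=> Mu j i; rewrite -row_mul mulmxV // row1 mxE eqxx eq_sym. Qed.

Lemma coord_int (M : 'M[R]_d) : (forall i j, invmx M i j \is a Num.int) ->
  forall (z : V), int_vec z -> forall i, (z *m invmx M) 0 i \is a Num.int.
Proof.
move=> Mi z zi i; rewrite mxE; apply: rpred_sum => k _; apply: rpredM; [exact: zi|exact: Mi].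
Qed.

Lemma coord_dot (N : 'M[R]_d) (z : V) i : (z *m N) 0 i = dotv (\row_k N k i) z.
Proof. by rewrite mxE /dotv; apply: eq_bigr => k _; rewrite mxE mulrC. Qed.

Lemma int_unit (a b : R) : a \is a Num.int -> b \is a Num.int -> a * b = 1 -> `|b| = 1.
Proof.
move=> ai bi ab.
have a0 : a != 0 by apply: contra_eq_neq ab => ->; rewrite mul0r eq_sym oner_eq0.
have b0 : b != 0 by apply: contra_eq_neq ab => ->; rewrite mulr0 eq_sym oner_eq0.
have ha := norm_intr_ge1 ai a0; have hb := norm_intr_ge1 bi b0.
have : `|a| * `|b| = 1 by rewrite -normrM ab normr1.
move=> E; apply/eqP; rewrite eq_le hb andbT.
by rewrite -E ler_peMl // (le_trans ler01).
Qed.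

End Helpers.

Ltac sdec x y xy yx := let j := fresh "j" in let jx := fresh "jx" in
  let jy := fresh "jy" in
  apply/setP => j; rewrite !inE ?finset.in_setT /=;
  case: (eqVneq j x) => [E|jx];
  [ subst j; rewrite ?eqxx ?(negPf xy) ?(negPf yx) ?andbT ?andbF ?orbT ?orbF //=
  | rewrite ?(negPf jx) /=; case: (eqVneq j y) => [E|jy];
    [ subst j; rewrite ?eqxx ?(negPf xy) ?(negPf yx) ?andbT ?andbF ?orbT ?orbF //=
    | rewrite ?(negPf jy) ?andbT ?andbF ?orbT ?orbF //= ] ].

Section Cube.
Variables (R : realType) (d : nat) (C : set 'rV[R]_d)
  (L : {set 'I_d} -> {set 'I_d} -> set 'rV[R]_d) (s : seq 'rV[R]_d).
Hypothesis hs : C = conv s.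
Hypothesis HL : cube_labeling C L.
Local Notation V := 'rV[R]_d.
Implicit Types (I J : {set 'I_d}).

Lemma Lface I J : [disjoint I & J]%bool -> face C (L I J).
Proof. by case: HL => H _ /H []. Qed.
Lemma Lne I J : [disjoint I & J]%bool -> L I J !=set0.
Proof. by case: HL => H _ /H []. Qed.
Lemma Lsub I J (I' J' : {set 'I_d}) : [disjoint I & J]%bool -> [disjoint I' & J']%bool ->
  (L I J `<=` L I' J' <-> (I' \subset I) /\ (J' \subset J)).
Proof. by case: HL => _ [_ H]; apply: H. Qed.
Lemma Llab F : face C F -> F !=set0 ->
  exists I J, [disjoint I & J]%bool /\ F = L I J.
Proof. by case: HL => _ [H _]; apply: H. Qed.

Lemma Lsub1 I J (I' J' : {set 'I_d}) : [disjoint I & J]%bool -> [disjoint I' & J']%bool ->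
  L I J `<=` L I' J' -> (I' \subset I) /\ (J' \subset J).
Proof. by move=> h1 h2 /(Lsub h1 h2). Qed.
Lemma Lsub2 I J (I' J' : {set 'I_d}) : [disjoint I & J]%bool -> [disjoint I' & J']%bool ->
  (I' \subset I) -> (J' \subset J) -> L I J `<=` L I' J'.
Proof. by move=> h1 h2 s1 s2; apply/(Lsub h1 h2). Qed.

Lemma Linj I J (I' J' : {set 'I_d}) : [disjoint I & J]%bool -> [disjoint I' & J']%bool ->
  L I J = L I' J' -> I = I' /\ J = J'.
Proof.
move=> h1 h2 E.
have [a1 a2] := Lsub1 h1 h2 (ltac:(by rewrite E)).
have [b1 b2] := Lsub1 h2 h1 (ltac:(by rewrite E)).
by split; apply/eqP; rewrite finset.eqEsubset ?a1 ?a2 ?b1 ?b2.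
Qed.

Definition complete (I J : {set 'I_d}) := [disjoint I & J]%bool /\ I :|: J = finset.setT.

Lemma complete_min I J (I' J' : {set 'I_d}) : complete I J -> [disjoint I' & J']%bool ->
  I \subset I' -> J \subset J' -> I' = I /\ J' = J.
Proof.
move=> [dIJ UIJ] dIJ' sI sJ; split; apply/eqP; rewrite finset.eqEsubset ?sI ?sJ andbT;
  apply/fintype.subsetP => k kI'.
- have : k \in I :|: J by rewrite UIJ finset.in_setT.
  rewrite inE => /orP [//|kJ].
  by move/disjP: dIJ' => /(_ k kI'); rewrite (fintype.subsetP sJ).
- have : k \in I :|: J by rewrite UIJ finset.in_setT.
  rewrite inE => /orP [kI|//].
  by move/disjP: dIJ' => /(_ k (fintype.subsetP sI k kI)); rewrite kI'.
Qed.

Lemma complete_single I J : complete I J -> exists v, L I J = [set v].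
Proof.
move=> cIJ; have dIJ := cIJ.1.
have key (l : V) p q : L I J p -> L I J q -> dotv l p <= dotv l q.
  move=> Lp Lq.
  have := Lface dIJ; rewrite hs => fF.
  have [F' [fF' [neF' [sF' mF']]]] := subface l fF (Lne dIJ).
  rewrite -hs in fF'.
  have [I' [J' [dIJ' EF']]] := Llab fF' neF'.
  rewrite EF' in sF'.
  have [sI sJ] := Lsub1 dIJ' dIJ sF'.
  have [eI eJ] := complete_min cIJ dIJ' sI sJ.
  by apply: mF' => //; rewrite EF' eI eJ.
have [v Lv] := Lne dIJ; exists v.
apply/seteqP; split => z /=.
  move=> Lz; apply/rowP => k; apply/le_anti.
  by rewrite -!dotv_unit !key.
by move=> ->.
Qed.

Lemma disjU1l I J k : [disjoint I & J]%bool -> k \notin J -> [disjoint k |: I & J]%bool.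
Proof.
move=> /disjP dIJ kJ; apply/disjP => j; rewrite !inE => /orP [/eqP -> //|]; exact: dIJ.
Qed.
Lemma disjU1r I J k : [disjoint I & J]%bool -> k \notin I -> [disjoint I & k |: J]%bool.
Proof.
move=> /disjP dIJ kI; apply/disjP => j jI; rewrite !inE negb_or dIJ // andbT.
by apply: contraNneq kI => <-.
Qed.
Lemma disjD1 I J k k' : [disjoint I & J]%bool -> [disjoint I :\ k & J :\ k']%bool.
Proof.
move=> /disjP dIJ; apply/disjP => j; rewrite !inE => /andP [_ jI].
by rewrite (negPf (dIJ _ jI)) andbF.
Qed.

Definition flipI I k := if k \in I then I :\ k else k |: I.
Definition flipJ I J k := if k \in I then k |: J else J :\ k.

Hypothesis Hsm : smooth C.

Lemma edge_info I J : complete I J -> forall v, L I J = [set v] ->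
  forall (e : set V) (u : V), edge C e -> e v -> prim_dir v e u ->
  exists k w t, e = L (I :\ k) (J :\ k) /\ L (flipI I k) (flipJ I J k) = [set w] /\
    0 < t /\ u = t *: (w - v) /\ int_vec u.
Proof.
move=> cIJ v Lv e u [fe _] ev [w [wv [Ee [iu [t [t0 [ut _]]]]]]].
have dIJ := cIJ.1.
have [Ii [Ji [dI Ei]]] := Llab fe (ex_intro _ v ev).
have [sI sJ] : Ii \subset I /\ Ji \subset J.
  apply: (Lsub1 dIJ dI); rewrite Lv -Ei => z /= ->; exact: ev.
have ew : e w by rewrite Ee; exact: conv2_w.
have [k [kI kJ]] : exists k, k \notin Ii /\ k \notin Ji.
  apply: contrapT => Hn.
  have cI : complete Ii Ji.
    split => //; apply/setP => j; rewrite !inE.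
    apply: contrapT => /negP; rewrite negb_or => /andP [h1 h2]; apply: Hn; by exists j.
  have [E1 E2] := complete_min cI dIJ sI sJ.
  by move: ew; rewrite Ei -E1 -E2 Lv => /= /wv.
have sub_e : e `<=` C by case: fe => a [b [_ ->]] z [].
have segA I' J' : [disjoint I' & J']%bool -> L I' J' `<=` e -> L I' J' <> e ->
    L I' J' = [set v] \/ L I' J' = [set w].
  move=> d' s' n'; rewrite Ee in s' n' sub_e.
  by case: (seg_face (Lface d') (Lne d') s' sub_e) => [->|[->|]]; auto.
have dA : [disjoint k |: Ii & Ji]%bool by apply: disjU1l.
have dB : [disjoint Ii & k |: Ji]%bool by apply: disjU1r.
have sA : L (k |: Ii) Ji `<=` e by rewrite Ei; apply: Lsub2; rewrite ?finset.subsetUr ?subxx.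
have sB : L Ii (k |: Ji) `<=` e by rewrite Ei; apply: Lsub2; rewrite ?finset.subsetUr ?subxx.
have nA : L (k |: Ii) Ji <> e.
  rewrite Ei => /(Linj dA dI) [/setP /(_ k)]; rewrite !inE eqxx (negPf kI) //.
have nB : L Ii (k |: Ji) <> e.
  rewrite Ei => /(Linj dB dI) [_ /setP /(_ k)]; rewrite !inE eqxx (negPf kJ) //.
have nAB : L (k |: Ii) Ji <> L Ii (k |: Ji).
  move=> /(Linj dA dB) [/setP /(_ k)]; rewrite !inE eqxx (negPf kI) //.
have vw : [set v] <> [set w].
  move=> E; apply: wv; have h : [set w] w := erefl; rewrite -E in h; exact: h.
have hA := segA _ _ dA sA nA; have hB := segA _ _ dB sB nB.
have cover j : [|| j \in Ii, j \in Ji | j == k].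
  apply: contrapT => /negP; rewrite !negb_or => /andP [jI /andP [jJ jk]].
  have dA2 : [disjoint j |: Ii & Ji]%bool by apply: disjU1l.
  have sA2 : L (j |: Ii) Ji `<=` e by rewrite Ei; apply: Lsub2; rewrite ?finset.subsetUr ?subxx.
  have nA2 : L (j |: Ii) Ji <> e.
    rewrite Ei => /(Linj dA2 dI) [/setP /(_ j)]; rewrite !inE eqxx (negPf jI) //.
  have nA2A : L (j |: Ii) Ji <> L (k |: Ii) Ji.
    move=> /(Linj dA2 dA) [/setP /(_ k)]; rewrite !inE eqxx (negPf kI) eq_sym.
    by rewrite (negPf jk).
  have nA2B : L (j |: Ii) Ji <> L Ii (k |: Ji).
    move=> /(Linj dA2 dB) [_ /setP /(_ k)]; rewrite !inE eqxx (negPf kJ) //.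
  case: (segA _ _ dA2 sA2 nA2) => h2; case: hA => hA; case: hB => hB;
    first [by apply: nAB; rewrite hA hB | by apply: nA2A; rewrite h2 hA
          | by apply: nA2B; rewrite h2 hB].
have eI : Ii = I :\ k.
  apply/setP => j; rewrite !inE; apply/idP/idP.
    move=> jI; rewrite (fintype.subsetP sI _ jI) andbT; apply: contraNneq kI => <-//.
  case/andP => jk jI; have := cover j; rewrite (negPf jk) orbF => /orP [//|jJ].
  by move/disjP: dIJ => /(_ j jI); rewrite (fintype.subsetP sJ _ jJ).
have eJ : Ji = J :\ k.
  apply/setP => j; rewrite !inE; apply/idP/idP.
    move=> jJ; rewrite (fintype.subsetP sJ _ jJ) andbT; apply: contraNneq kJ => <-//.
  case/andP => jk jJ; have := cover j; rewrite (negPf jk) orbF => /orP [jI|//].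
  by move/disjP: dIJ => /(_ j (fintype.subsetP sI _ jI)); rewrite jJ.
exists k, w, t; split; first by rewrite Ei eI eJ.
split; last by [].
have : k \in I :|: J by rewrite cIJ.2 finset.in_setT.
rewrite /flipI /flipJ inE => /orP [kI'|kJ'].
- rewrite kI'.
  have EA : L (k |: Ii) Ji = [set v].
    rewrite -Lv eI eJ; congr L; apply/setP => j; rewrite !inE.
      by case: eqP => // ->.
    by case: eqP => // ->; rewrite (disjointFr dIJ kI').
  have EB : L Ii (k |: Ji) = [set w].
    by case: hB => // hB; case: nAB; rewrite EA hB.
  by rewrite -EB eI eJ; congr L; apply/setP => j; rewrite !inE;
    case: eqP => // ->; rewrite (disjointFr dIJ kI').
- have kI' : k \notin I by rewrite (disjointFl dIJ kJ').
  rewrite (negPf kI').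
  have EB : L Ii (k |: Ji) = [set v].
    rewrite -Lv eI eJ; congr L; apply/setP => j; rewrite !inE.
      by case: eqP => // ->; rewrite (negPf kI').
    by case: eqP => // ->.
  have EA : L (k |: Ii) Ji = [set w].
    by case: hA => // hA; case: nAB; rewrite EB hA.
  by rewrite -EA eI eJ; congr L; apply/setP => j; rewrite !inE;
    case: eqP => // ->; rewrite (negPf kI').
Qed.

Lemma vertex_data I J : complete I J ->
  exists v (M : 'M[R]_d) (sg : 'I_d -> 'I_d) (w : 'I_d -> V) (t : 'I_d -> R),
    L I J = [set v] /\ M \in unitmx /\ (forall i j, invmx M i j \is a Num.int) /\
    (forall i, int_vec (row i M)) /\ bijective sg /\
    (forall i, L (flipI I (sg i)) (flipJ I J (sg i)) = [set w i]) /\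
    (forall i, 0 < t i /\ row i M = t i *: (w i - v)).
Proof.
move=> cIJ; have [v Lv] := complete_single cIJ.
have vert : vertex C v by rewrite /vertex -Lv; apply: Lface; exact: cIJ.1.
case: Hsm => _ [_ H]; have [e [M [einj [He [_ Zb]]]]] := H v vert.
have Hi i : exists p : 'I_d * V * R,
    e i = L (I :\ p.1.1) (J :\ p.1.1) /\
    L (flipI I p.1.1) (flipJ I J p.1.1) = [set p.1.2] /\
    0 < p.2 /\ row i M = p.2 *: (p.1.2 - v) /\ int_vec (row i M).
  have [eE [ev pd]] := He i.
  by have [k [w [t H']]] := edge_info cIJ Lv eE ev pd; exists (k, w, t).
have [f Hf] := choice Hi.
have [Mu Mint] := Zbasis_unit Zb.
exists v, M, (fun i => (f i).1.1), (fun i => (f i).1.2), (fun i => (f i).2).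
split => //; split => //; split => //; split.
  by move=> i; have [_ [_ [_ [_ ?]]]] := Hf i.
split.
  apply: injF_bij => i j /= E; apply: einj.
  by have [-> _] := Hf i; have [-> _] := Hf j; rewrite E.
split; first by move=> i; have [_ [? _]] := Hf i.
by move=> i; have [_ [_ [? [? _]]]] := Hf i.
Qed.

Lemma face_sub F : face C F -> F `<=` C.
Proof. by case=> a [b [_ ->]] z []. Qed.

Lemma disj0r (A : {set 'I_d}) : [disjoint A & finset.set0]%bool.
Proof. by apply/disjP => j _; rewrite inE. Qed.
Lemma disj0l (A : {set 'I_d}) : [disjoint finset.set0 & A]%bool.
Proof. by apply/disjP => j; rewrite inE. Qed.

Lemma flip_complete I J k : complete I J -> complete (flipI I k) (flipJ I J k).
Proof.
case=> dIJ UIJ; rewrite /flipI /flipJ; case: ifP => kI; split.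
- apply/disjP => j; rewrite !inE => /andP [jk jI]; rewrite negb_or jk /=.
  exact: (disjP _ _ dIJ).
- apply/setP => j; rewrite !inE; have := UIJ; move/setP/(_ j); rewrite !inE.
  by case: eqP => // ->; rewrite kI.
- apply/disjP => j; rewrite !inE => /orP [/eqP -> | jI].
    by rewrite eqxx.
  by rewrite (disjointFr dIJ jI) andbF.
- apply/setP => j; rewrite !inE; have := UIJ; move/setP/(_ j); rewrite !inE.
  by case: eqP => // ->; rewrite kI.
Qed.

Section Vert.
Variables (I J : {set 'I_d}) (v : V) (M : 'M[R]_d) (sg : 'I_d -> 'I_d)
  (w : 'I_d -> V) (t : 'I_d -> R).
Hypotheses (cIJ : complete I J) (Lv : L I J = [set v]) (Mu : M \in unitmx)
  (sgb : bijective sg)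
  (Lw : forall i, L (flipI I (sg i)) (flipJ I J (sg i)) = [set w i])
  (Ht : forall i, 0 < t i /\ row i M = t i *: (w i - v)).

Definition Gf k := if k \in I then L [set k]%SET finset.set0 else L finset.set0 [set k]%SET.

Lemma Gf_sub k I' J' : [disjoint I' & J']%bool ->
  (if k \in I then k \in I' else k \in J') -> L I' J' `<=` Gf k.
Proof.
move=> d' h; rewrite /Gf; case: ifP h => kI h.
  apply: Lsub2; [exact: d' | exact: disj0r | by rewrite finset.sub1set | exact: finset.sub0set].
apply: Lsub2; [exact: d' | exact: disj0l | exact: finset.sub0set | by rewrite finset.sub1set].
Qed.

Lemma Gf_notsub k I' J' : [disjoint I' & J']%bool ->
  L I' J' `<=` Gf k -> (if k \in I then k \in I' else k \in J').
Proof.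
move=> d'; rewrite /Gf; case: ifP => kI.
  by move/(Lsub1 d' (disj0r _)) => [h _]; rewrite finset.sub1set in h.
by move/(Lsub1 d' (disj0l _)) => [_ h]; rewrite finset.sub1set in h.
Qed.

Lemma kJ_of k : k \notin I -> k \in J.
Proof. by move=> kI; have := cIJ.2; move/setP/(_ k); rewrite !inE (negPf kI). Qed.

Lemma v_in_Gf k : Gf k v.
Proof.
have := @Gf_sub k I J cIJ.1; rewrite Lv; apply => //.
by case: ifP => // /negbT /kJ_of.
Qed.

Lemma w_in_Gf k j : sg j != k -> Gf k (w j).
Proof.
move=> jk; have := @Gf_sub k _ _ (flip_complete (sg j) cIJ).1.
rewrite Lw; apply => //; rewrite /flipI /flipJ.
case: ifP => kI; case: ifP => jI; rewrite !inE.
- by rewrite eq_sym jk kI.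
- by rewrite kI orbT.
- by rewrite (kJ_of (negbT kI)) orbT.
- by rewrite eq_sym jk (kJ_of (negbT kI)).
Qed.

Lemma w_notin_Gf k i : sg i = k -> ~ Gf k (w i).
Proof.
move=> ik Gw; have := @Gf_notsub k _ _ (flip_complete (sg i) cIJ).1.
rewrite Lw ik => /(_ (fun z (E : z = w i) => ltac:(by rewrite E))).
by case kI: (k \in I); rewrite /flipI /flipJ kI !inE eqxx.
Qed.

Lemma facet_props k (a : V) b : (forall z, C z -> dotv a z <= b) ->
  Gf k = C `&` [set z | dotv a z = b] ->
  (forall i, sg i = k -> dotv a (row i M) < 0) /\
  (forall j, sg j != k -> dotv a (row j M) = 0).
Proof.
move=> Hab EG.
have av : dotv a v = b by have := v_in_Gf k; rewrite EG => -[].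
have wC j : C (w j).
  apply: (face_sub (Lface (flip_complete (sg j) cIJ).1)); rewrite Lw //.
split.
  move=> i ik; have [t0 ->] := Ht i; rewrite dotvZ dotvB av pmulr_rlt0 // subr_lt0.
  rewrite lt_neqAle Hab // andbT; apply/eqP => E; apply: (w_notin_Gf ik).
  by rewrite EG; split.
move=> j jk; have [_ ->] := Ht j; rewrite dotvZ dotvB av.
have := w_in_Gf jk; rewrite EG => -[_ /= ->]; by rewrite subrr mulr0.
Qed.

Lemma coordE (z : V) : z = \sum_j (z *m invmx M) 0 j *: row j M.
Proof. by rewrite -mulmx_sum_row mulmxKV. Qed.

Lemma facet_coord k (a : V) b : (forall z, C z -> dotv a z <= b) ->
  Gf k = C `&` [set z | dotv a z = b] ->
  forall i, sg i = k -> dotv a (row i M) < 0 /\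
    forall z, dotv a z = (z *m invmx M) 0 i * dotv a (row i M).
Proof.
move=> Hab EG i ik; have [h1 h2] := facet_props Hab EG; split; first exact: h1.
move=> z; rewrite {1}(coordE z) dotv_sum (bigD1 i) //= big1 ?addr0 ?dotvZ //.
move=> j ji; rewrite dotvZ h2 ?mulr0 //; apply: contra ji => /eqP E; apply/eqP.
by apply: (bij_inj sgb); rewrite E ik.
Qed.

Lemma Gf_face k : face C (Gf k).
Proof. by rewrite /Gf; case: ifP => _; apply: Lface; [apply: disj0r | apply: disj0l]. Qed.

Lemma lin_formula I' J' : [disjoint I' & J']%bool -> I' \subset I -> J' \subset J ->
  lin (L I' J') = [set z | forall i, sg i \in I' :|: J' -> (z *m invmx M) 0 i = 0].
Proof.
move=> d' sI sJ; apply/seteqP; split => z.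
  rewrite /lin /=; case=> n [c [p [q [Hpq ->]]]] i iK.
  have [a [b [Hab EG]]] := Gf_face (sg i).
  have [neg Hc] := facet_coord Hab EG (erefl (sg i)).
  have sub : L I' J' `<=` Gf (sg i).
    apply: Gf_sub => //; move: iK; rewrite inE; case: ifP => kI /orP [] // kK.
      by move: (fintype.subsetP sJ _ kK); rewrite (disjointFr cIJ.1 kI).
    by move: (fintype.subsetP sI _ kK); rewrite kI.
  have : dotv a (\sum_(i0 < n) c i0 *: (p i0 - q i0)) = 0.
    rewrite dotv_sum big1 // => j _; rewrite dotvZ dotvB.
    have [Pp Pq] := Hpq j.
    have := sub _ Pp; have := sub _ Pq; rewrite EG => -[_ /= ->] [_ /= ->].
    by rewrite subrr mulr0.
  rewrite Hc => /eqP; rewrite mulf_eq0 => /orP [/eqP //|/eqP E].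
  by move: neg; rewrite E ltxx.
move=> /= Hz.
have vF : L I' J' v by rewrite -[L I' J' v]/((L I' J') v); apply: (Lsub2 cIJ.1 d' sI sJ); rewrite Lv.
exists d, (fun j => (z *m invmx M) 0 j * t j),
  (fun j => if sg j \in I' :|: J' then v else w j), (fun _ => v); split.
  move=> j; split => //; case: ifP => // jK.
  have cf := flip_complete (sg j) cIJ.
  have : L (flipI I (sg j)) (flipJ I J (sg j)) `<=` L I' J'.
    apply: Lsub2 => //; [exact: cf.1| |]; apply/fintype.subsetP => x xK;
      move: jK; rewrite /flipI /flipJ inE; case: ifP => jI; rewrite !inE;
      case: eqP => [<-|_]; rewrite ?xK //= ?orbT //.
    - by rewrite (fintype.subsetP sI).
    - by rewrite (fintype.subsetP sI).
    - by rewrite (fintype.subsetP sJ).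
    - by rewrite (fintype.subsetP sJ).
  by rewrite Lw; apply.
rewrite {1}(coordE z); apply: eq_bigr => j _; case: ifP => jK.
  by rewrite Hz // subrr scaler0 scale0r.
by have [_ ->] := Ht j; rewrite scalerA.
Qed.

End Vert.

Lemma flipI_in I k : k \in I -> flipI I k = I :\ k.
Proof. by rewrite /flipI => ->. Qed.
Lemma flipI_out I k : k \notin I -> flipI I k = k |: I.
Proof. by rewrite /flipI => /negPf ->. Qed.
Lemma flipJ_in I J k : k \in I -> flipJ I J k = k |: J.
Proof. by rewrite /flipJ => ->. Qed.
Lemma flipJ_out I J k : k \notin I -> flipJ I J k = J :\ k.
Proof. by rewrite /flipJ => /negPf ->. Qed.

Lemma Gf_in I k : k \in I -> Gf I k = L [set k]%SET finset.set0.
Proof. by rewrite /Gf => ->. Qed.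
Lemma Gf_out I k : k \notin I -> Gf I k = L finset.set0 [set k]%SET.
Proof. by rewrite /Gf => /negPf ->. Qed.

Lemma Lpt_C I J p : complete I J -> L I J = [set p] -> C p.
Proof. by move=> c E; apply: (face_sub (Lface c.1)); rewrite E. Qed.

Section Half.
Local Notation T := (finset.setT : {set 'I_d}).
Local Notation E0 := (finset.set0 : {set 'I_d}).
Variables (x y : 'I_d) (v1 : V) (M1 : 'M[R]_d) (sg1 : 'I_d -> 'I_d)
  (w1 : 'I_d -> V) (t1 : 'I_d -> R) (ix iy : 'I_d).
Hypotheses (xy : x != y) (c1 : complete T E0) (Lv1 : L T E0 = [set v1])
  (Mu1 : M1 \in unitmx) (Mi1 : forall i j, invmx M1 i j \is a Num.int)
  (Mr1 : forall i, int_vec (row i M1)) (sgb1 : bijective sg1)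
  (Lw1 : forall i, L (flipI T (sg1 i)) (flipJ T E0 (sg1 i)) = [set w1 i])
  (Ht1 : forall i, 0 < t1 i /\ row i M1 = t1 i *: (w1 i - v1))
  (six : sg1 ix = x) (siy : sg1 iy = y)
  (Hpar : lin (L [set x; y]%SET E0) = lin (L [set y]%SET [set x]%SET)).

Lemma ixy : ix != iy.
Proof. by apply: contraNneq xy => e; rewrite -six -siy e. Qed.

Lemma lin_xy z : lin (L [set x; y]%SET E0) z <->
  (z *m invmx M1) 0 ix = 0 /\ (z *m invmx M1) 0 iy = 0.
Proof.
rewrite (lin_formula c1 Lv1 Mu1 sgb1 Lw1 Ht1 (I' := [set x; y]%SET) (J' := E0)) /=;
  [|exact: disj0r|exact: finset.subsetT|exact: subxx].
split.
  by move=> H; split; apply: H; rewrite ?six ?siy !inE eqxx ?orbT.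
move=> [h1 h2] i; rewrite !inE orbF => /orP [] /eqP e.
  by have -> : i = ix by apply: (bij_inj sgb1); rewrite e six.
by have -> : i = iy by apply: (bij_inj sgb1); rewrite e siy.
Qed.

Lemma lin_x1 z : lin (L [set x]%SET E0) z <-> (z *m invmx M1) 0 ix = 0.
Proof.
rewrite (lin_formula c1 Lv1 Mu1 sgb1 Lw1 Ht1 (I' := [set x]%SET) (J' := E0)) /=;
  [|exact: disj0r|exact: finset.subsetT|exact: subxx].
split; first by move=> H; apply: H; rewrite six !inE eqxx.
move=> h1 i; rewrite !inE orbF => /eqP e.
by have -> : i = ix by apply: (bij_inj sgb1); rewrite e six.
Qed.

Lemma half : exists (v2 v4 p : V) (sp : R) (aX : V) (bX A : R),
  L (flipI T x) (flipJ T E0 x) = [set v2] /\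
  L (flipI (flipI T x) y) (flipJ (flipI T x) (flipJ T E0 x) y) = [set v4] /\
  int_vec p /\ 0 < sp /\ p = sp *: (v4 - v2) /\
  (p *m invmx M1) 0 iy = 1 /\ (p *m invmx M1) 0 ix \is a Num.int /\
  0 < A /\
  (forall z, dotv aX z = A * ((z *m invmx M1) 0 ix -
                              (p *m invmx M1) 0 ix * (z *m invmx M1) 0 iy)) /\
  dotv aX v4 = bX /\ dotv aX (w1 iy) < bX /\
  (forall z, lin (L E0 [set x]%SET) z <->
     (z *m invmx M1) 0 ix = (p *m invmx M1) 0 ix * (z *m invmx M1) 0 iy).
Proof.
have yx : y != x by rewrite eq_sym.
have c2 := flip_complete x c1.
have [v2 [M2 [sg2 [w2 [t2 [Lv2 [Mu2 [Mi2 [Mr2 [sgb2 [Lw2 Ht2]]]]]]]]]]] := vertex_data c2.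
have ev2 : w1 ix = v2 by apply: single_eq; rewrite -Lw1 -Lv2 six.
case: (sgb2) => g2 g2K Kg2.
pose i2x := g2 x; pose i2y := g2 y.
have s2x : sg2 i2x = x := Kg2 x.
have s2y : sg2 i2y = y := Kg2 y.
have xT : x \in T := finset.in_setT x.
have yTx : y \in flipI T x by rewrite flipI_in // !inE yx.
have xTx : x \notin flipI T x by rewrite flipI_in // !inE eqxx.
have ev1 : w2 i2x = v1.
  apply: single_eq; rewrite -Lw2 -Lv1 s2x; congr L.
    by apply/setP => j; rewrite flipI_out // flipI_in // !inE; case: eqP.
  by apply/setP => j; rewrite flipJ_out // flipJ_in // !inE; case: eqP.
set v4 := w2 i2y.
have Lv4 : L (flipI (flipI T x) y) (flipJ (flipI T x) (flipJ T E0 x) y) = [set v4].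
  by rewrite -s2y Lw2.
set N1 := invmx M1.
set p := row i2y M2.
have [sp0 Ep] := Ht2 i2y.
(* rows of M2 other than i2x i2y lie in lin F_xy *)
have i2xy j : sg2 j \in [set y]%SET :|: [set x]%SET -> j = i2x \/ j = i2y.
  rewrite !inE => /orP [] /eqP e; [right|left].
    by rewrite -(g2K j) e.
  by rewrite -(g2K j) e.
have lin2 z : lin (L [set y]%SET [set x]%SET) z <->
    (z *m invmx M2) 0 i2x = 0 /\ (z *m invmx M2) 0 i2y = 0.
  rewrite (lin_formula c2 Lv2 Mu2 sgb2 Lw2 Ht2 (I' := [set y]%SET) (J' := [set x]%SET)) /=.
  - split; first by move=> H; split; apply: H; rewrite ?s2x ?s2y !inE eqxx ?orbT.
    by move=> [h1 h2] i /i2xy [] ->.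
  - by apply/disjP => j; rewrite !inE => /eqP ->.
  - by rewrite finset.sub1set.
  - by rewrite flipJ_in // finset.sub1set !inE eqxx.
have zeroj j : j != i2x -> j != i2y ->
    (row j M2 *m N1) 0 ix = 0 /\ (row j M2 *m N1) 0 iy = 0.
  move=> jx jy; apply/lin_xy; rewrite Hpar; apply/lin2.
  by rewrite !coord_row // (negPf jx) (negPf jy).
have rowx : (row i2x M2 *m N1) 0 iy = 0.
  have [t10 E1] := Ht1 ix; have [t20 E2] := Ht2 i2x.
  have -> : row i2x M2 = (- (t2 i2x / t1 ix)) *: row ix M1.
    rewrite E1 E2 ev1 ev2 scalerA; apply/rowP => k; rewrite !mxE.
    by field; rewrite gt_eqF.
  by rewrite -scalemxAl mxE coord_row // (negPf ixy) mulr0.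
set uy := row iy M1.
set cu := uy *m invmx M2.
have cuint i : cu 0 i \is a Num.int by apply: coord_int => //; apply: Mr1.
have p2int : (p *m N1) 0 iy \is a Num.int by apply: coord_int => //; apply: Mr2.
have p1int : (p *m N1) 0 ix \is a Num.int by apply: coord_int => //; apply: Mr2.
have cp : cu 0 i2y * (p *m N1) 0 iy = 1.
  have : (uy *m N1) 0 iy = 1 by rewrite coord_row // eqxx.
  rewrite {1}(coordE Mu2 uy) coord_dot dotv_sum (bigD1 i2y) //= big1.
    by rewrite addr0 dotvZ -coord_dot.
  move=> j jy; rewrite dotvZ -coord_dot.
  case: (eqVneq j i2x) => [->|jx]; first by rewrite rowx mulr0.
  by have [_ ->] := zeroj j jx jy; rewrite mulr0.
have p2abs := int_unit (cuint i2y) p2int cp.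
have [ay [by_ [Haby EGy]]] := Gf_face T y.
have [negy Hcy] := facet_coord c1 Lv1 Mu1 sgb1 Lw1 Ht1 Haby EGy siy.
have v2Gy : Gf T y v2.
  by rewrite -ev2; apply: (w_in_Gf c1 Lw1); rewrite six.
have v4nGy : ~ Gf T y v4.
  have := w_notin_Gf c2 Lw2 s2y; rewrite /v4 /Gf yTx finset.in_setT //.
have Cv4 : C v4 by apply: (Lpt_C (flip_complete y c2)).
have ayv2 : dotv ay v2 = by_ by move: v2Gy; rewrite EGy => -[].
have ayv4 : dotv ay v4 < by_.
  rewrite lt_neqAle Haby // andbT; apply/eqP => E; apply: v4nGy; rewrite EGy; by split.
have p2pos : 0 < (p *m N1) 0 iy.
  have h : dotv ay p < 0 by rewrite /p Ep dotvZ dotvB ayv2 pmulr_rlt0 // subr_lt0.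
  rewrite Hcy -/N1 in h; nra.
have p2one : (p *m N1) 0 iy = 1 by rewrite -(gtr0_norm p2pos).
have [aX [bX [HabX EGX]]] := Gf_face (flipI T x) x.
have [negX HcX] := facet_coord c2 Lv2 Mu2 sgb2 Lw2 Ht2 HabX EGX s2x.
have zeroX j : j != ix -> j != iy -> dotv aX (row j M1) = 0.
  move=> jx jy.
  have : lin (L [set y]%SET [set x]%SET) (row j M1).
    by rewrite -Hpar; apply/lin_xy; rewrite !coord_row // (negPf jx) (negPf jy).
  by case/lin2 => h _; rewrite HcX h mul0r.
have aXv2 : dotv aX v2 = bX by have := v_in_Gf c2 Lv2 x; rewrite EGX => -[].
have Cv1 : C v1 by apply: (Lpt_C c1 Lv1).
have aXv1 : dotv aX v1 < bX.
  rewrite lt_neqAle HabX // andbT; apply/eqP => E.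
  by apply: (w_notin_Gf c2 Lw2 s2x); rewrite ev1 EGX; split.
pose A := dotv aX (row ix M1); pose B := dotv aX (row iy M1).
have Apos : 0 < A.
  have [t10 E1] := Ht1 ix; rewrite /A E1 ev2 dotvZ dotvB aXv2.
  by rewrite mulr_gt0 // subr_gt0.
have aXexp z : dotv aX z = (z *m N1) 0 ix * A + (z *m N1) 0 iy * B.
  rewrite {1}(coordE Mu1 z) dotv_sum (bigD1 ix) //= (bigD1 iy) /=; last by rewrite eq_sym ixy.
  rewrite big1 ?addr0 ?dotvZ ?addrA //.
  by move=> j /andP [jx jy]; rewrite dotvZ zeroX ?mulr0.
have aXv4 : dotv aX v4 = bX.
  have := w_in_Gf c2 Lw2 (k := x) (j := i2y); rewrite s2y => /(_ yx).
  by rewrite EGX => -[].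
have aXp : dotv aX p = 0 by rewrite /p Ep dotvZ dotvB aXv4 aXv2 subrr mulr0.
have EB : B = - ((p *m N1) 0 ix * A).
  by move: aXp; rewrite aXexp p2one mul1r => /eqP; rewrite addr_eq0 => /eqP ->; rewrite opprK.
have aXform z : dotv aX z = A * ((z *m N1) 0 ix - (p *m N1) 0 ix * (z *m N1) 0 iy).
  by rewrite aXexp EB; ring.
exists v2, v4, p, (t2 i2y), aX, bX, A.
split => //; split => //; split; first exact: Mr2.
split => //; split => //; split => //; split => //; split => //; split => //.
split => //; split.
  have Cw : C (w1 iy) by apply: (Lpt_C (flip_complete (sg1 iy) c1) (Lw1 iy)).
  rewrite lt_neqAle HabX // andbT; apply/eqP => E.
  have : L (flipI T y) (flipJ T E0 y) `<=` Gf (flipI T x) x.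
    by rewrite -siy Lw1 => z ->; rewrite EGX; split.
  move/(Gf_notsub (flip_complete y c1).1); rewrite (negPf xTx) flipJ_in //.
  by rewrite !inE (negPf xy).
move=> z.
rewrite (lin_formula c2 Lv2 Mu2 sgb2 Lw2 Ht2 (I' := E0) (J' := [set x]%SET)) /=;
  [|exact: disj0l|exact: finset.sub0set|by rewrite flipJ_in // finset.sub1set !inE eqxx].
have negX0 : dotv aX (row i2x M2) != 0 by rewrite lt_eqF.
split.
  move=> H; have h := H i2x; rewrite s2x !inE eqxx /= in h.
  have := HcX z; rewrite (h erefl) mul0r aXform => /eqP.
  by rewrite mulf_eq0 (gt_eqF Apos) /= subr_eq0 => /eqP.
move=> E i; rewrite !inE /= => /eqP e.
have -> : i = i2x by rewrite -(g2K i) e.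
have := HcX z; rewrite aXform E subrr mulr0 => /esym /eqP.
by rewrite mulf_eq0 (negPf negX0) orbF => /eqP.
Qed.

End Half.

Lemma final (x y : 'I_d) : x != y ->
  lin (L [set x; y]%SET finset.set0) = lin (L [set x]%SET [set y]%SET) ->
  lin (L [set x; y]%SET finset.set0) = lin (L [set y]%SET [set x]%SET) ->
  lin (L [set x; y]%SET finset.set0) = lin (L finset.set0 [set x; y]%SET) ->
  lin (L [set x]%SET finset.set0) = lin (L finset.set0 [set x]%SET) \/
  lin (L [set y]%SET finset.set0) = lin (L finset.set0 [set y]%SET).
Proof.
move=> xy H1 H2 H3.
have yx : y != x by rewrite eq_sym.
have c1 : complete finset.setT finset.set0.
  by split; [exact: disj0r | apply/setP => j; rewrite !inE].
have [v1 [M1 [sg1 [w1 [t1 [Lv1 [Mu1 [Mi1 [Mr1 [sgb1 [Lw1 Ht1]]]]]]]]]]] := vertex_data c1.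
case: (sgb1) => g1 g1K Kg1.
pose ix := g1 x; pose iy := g1 y.
have six : sg1 ix = x := Kg1 x.
have siy : sg1 iy = y := Kg1 y.
have ixy : ix != iy by apply: contraNneq xy => e; rewrite -six -siy e.
have H1' : lin (L [set y; x]%SET finset.set0) = lin (L [set x]%SET [set y]%SET).
  by rewrite finset.setUC.
have [v2 [v4 [p [sp [aX [bX [A [Lv2 [Lv4 [pint [sp0 [Ep [p2 [p1int [Apos [aXf [aXv4 [aXv3 linXb]]]]]]]]]]]]]]]]]]
  := half xy c1 Lv1 Mu1 Mi1 Mr1 sgb1 Lw1 Ht1 six siy H2.
have [v3 [v4' [q [sq [aY [bY [A' [Lv3 [Lv4' [qint [sq0 [Eq [q1 [q2int [A'pos [aYf [aYv4 [aYv2 linYb]]]]]]]]]]]]]]]]]]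
  := half yx c1 Lv1 Mu1 Mi1 Mr1 sgb1 Lw1 Ht1 siy six H1'.
set N1 := invmx M1 in p2 p1int aXf linXb q1 q2int aYf linYb.
have xT : x \in finset.setT := finset.in_setT x.
have yT : y \in finset.setT := finset.in_setT y.
have e4 : v4' = v4.
  have I4' : flipI (flipI finset.setT y) x = finset.setT :\ y :\ x.
    by rewrite !flipI_in // !inE xy.
  have J4' : flipJ (flipI finset.setT y) (flipJ finset.setT finset.set0 y) x =
      x |: (y |: finset.set0).
    by rewrite !flipJ_in ?flipI_in // !inE xy.
  have I4 : flipI (flipI finset.setT x) y = finset.setT :\ x :\ y.
    by rewrite !flipI_in // !inE yx.
  have J4 : flipJ (flipI finset.setT x) (flipJ finset.setT finset.set0 x) y =
      y |: (x |: finset.set0).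
    by rewrite !flipJ_in ?flipI_in // !inE yx.
  apply: single_eq; rewrite -Lv4 -Lv4' I4 J4 I4' J4'.
  by congr L; sdec x y xy yx.
rewrite e4 in Lv4' Eq aYv4.
have e3 : w1 iy = v3 by apply: single_eq; rewrite -Lv3 -Lw1 siy.
rewrite e3 in aXv3.
pose p1 := (p *m N1) 0 ix; pose q2 := (q *m N1) 0 iy.
have orient : 0 < 1 - p1 * q2.
  have h : 0 < dotv aX q by rewrite Eq dotvZ dotvB aXv4 mulr_gt0 // subr_gt0.
  rewrite aXf q1 -/p1 -/q2 in h.
  by rewrite -(pmulr_rgt0 _ Apos).
have c4 : complete (flipI (flipI finset.setT x) y)
    (flipJ (flipI finset.setT x) (flipJ finset.setT finset.set0 x) y).
  exact: flip_complete (flip_complete _ c1).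
have [v4'' [M4 [sg4 [w4 [t4 [Lv4'' [Mu4 [Mi4 [Mr4 [sgb4 [Lw4 Ht4]]]]]]]]]]] := vertex_data c4.
have e4' : v4'' = v4 by apply: single_eq; rewrite -Lv4 -Lv4''.
rewrite e4' in Lv4'' Ht4.
case: (sgb4) => g4 g4K Kg4.
pose j4x := g4 x; pose j4y := g4 y.
have s4x : sg4 j4x = x := Kg4 x.
have s4y : sg4 j4y = y := Kg4 y.
have j4xy : j4x != j4y by apply: contraNneq xy => e; rewrite -s4x -s4y e.
have I4 : flipI (flipI finset.setT x) y = finset.setT :\ x :\ y.
  by rewrite !flipI_in // !inE yx.
have J4 : flipJ (flipI finset.setT x) (flipJ finset.setT finset.set0 x) y =
    y |: (x |: finset.set0).
  by rewrite !flipJ_in ?flipI_in // !inE yx.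
have LV2 : L (finset.setT :\ x) (x |: finset.set0) = [set v2].
  by rewrite -Lv2 flipI_in ?flipJ_in.
have LV3 : L (finset.setT :\ y) (y |: finset.set0) = [set v3].
  by rewrite -Lv3 flipI_in ?flipJ_in.
have yn4 : y \notin finset.setT :\ x :\ y by rewrite !inE eqxx.
have xn4 : x \notin finset.setT :\ x :\ y by rewrite !inE eqxx andbF.
have w4y : w4 j4y = v2.
  apply: single_eq; rewrite -LV2 -Lw4 s4y I4 J4 flipI_out // flipJ_out //.
  by congr L; sdec y x yx xy.
have w4x : w4 j4x = v3.
  apply: single_eq; rewrite -LV3 -Lw4 s4x I4 J4 flipI_out // flipJ_out //.
  by congr L; sdec x y xy yx.
pose r := row j4y M4; pose r' := row j4x M4.
pose rho := - (t4 j4y / sp); pose rho' := - (t4 j4x / sq).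
have [t4y0 E4y] := Ht4 j4y; have [t4x0 E4x] := Ht4 j4x.
have Er : r = rho *: p.
  rewrite /r E4y w4y Ep scalerA; apply/rowP => k; rewrite !mxE.
  by rewrite /rho; field; rewrite gt_eqF.
have Er' : r' = rho' *: q.
  rewrite /r' E4x w4x Eq scalerA; apply/rowP => k; rewrite !mxE.
  by rewrite /rho'; field; rewrite gt_eqF.
have cr i : (r *m N1) 0 i = rho * (p *m N1) 0 i by rewrite Er -scalemxAl mxE.
have cr' i : (r' *m N1) 0 i = rho' * (q *m N1) 0 i by rewrite Er' -scalemxAl mxE.
have rhoint : rho \is a Num.int.
  have := coord_int Mi1 (Mr4 j4y) iy; rewrite -/N1 -/r cr p2 mulr1 //.
have rho'int : rho' \is a Num.int.
  have := coord_int Mi1 (Mr4 j4x) ix; rewrite -/N1 -/r' cr' q1 mulr1 //.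
(* other rows of M4 are in lin F_xy *)
have zero4 j : j != j4x -> j != j4y ->
    (row j M4 *m N1) 0 ix = 0 /\ (row j M4 *m N1) 0 iy = 0.
  move=> jx jy; apply/(lin_xy c1 Lv1 Mu1 sgb1 Lw1 Ht1 six siy); rewrite H3.
  rewrite (lin_formula c4 Lv4'' Mu4 sgb4 Lw4 Ht4 (I' := finset.set0) (J' := [set x; y]%SET)) /=.
  - move=> i; rewrite !inE /= coord_row // => /orP [] /eqP e.
      have -> : i = j4x by rewrite -(g4K i) e.
      by rewrite (negPf jx).
    have -> : i = j4y by rewrite -(g4K i) e.
    by rewrite (negPf jy).
  - exact: disj0l.
  - exact: finset.sub0set.
  - rewrite J4; apply/fintype.subsetP => k0; rewrite !inE; case/orP => ->; by rewrite ?orbT.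
have expand (z : V) i : i = ix \/ i = iy -> (z *m N1) 0 i =
    (z *m invmx M4) 0 j4y * (r *m N1) 0 i + (z *m invmx M4) 0 j4x * (r' *m N1) 0 i.
  move=> hi.
  rewrite {1}(coordE Mu4 z) coord_dot dotv_sum (bigD1 j4y) //= (bigD1 j4x) /=;
    last exact: j4xy.
  rewrite big1 ?addr0 ?dotvZ -?coord_dot ?addrA //.
  move=> j /andP [jy jx]; rewrite dotvZ -coord_dot.
  by have [h1 h2] := zero4 j jx jy; case: hi => ->; rewrite ?h1 ?h2 mulr0.
set a := (row ix M1 *m invmx M4) 0 j4y; set b := (row ix M1 *m invmx M4) 0 j4x.
set c := (row iy M1 *m invmx M4) 0 j4y; set e := (row iy M1 *m invmx M4) 0 j4x.
have aint : a \is a Num.int by apply: coord_int.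
have bint : b \is a Num.int by apply: coord_int.
have cint : c \is a Num.int by apply: coord_int.
have eint : e \is a Num.int by apply: coord_int.
have Q1 : 1 = a * (rho * p1) + b * rho'.
  have := expand (row ix M1) ix (or_introl erefl).
  by rewrite coord_row // eqxx cr cr' q1 mulr1.
have Q2 : 0 = a * rho + b * (rho' * q2).
  have := expand (row ix M1) iy (or_intror erefl).
  by rewrite coord_row // (negPf ixy) cr cr' p2 mulr1.
have Q3 : 0 = c * (rho * p1) + e * rho'.
  have := expand (row iy M1) ix (or_introl erefl).
  by rewrite coord_row // eq_sym (negPf ixy) cr cr' q1 mulr1.
have Q4 : 1 = c * rho + e * (rho' * q2).
  have := expand (row iy M1) iy (or_intror erefl).
  by rewrite coord_row // eqxx cr cr' p2 mulr1.
have det : ((a * e - b * c) * rho * rho') * (p1 * q2 - 1) = 1.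
  transitivity ((a * (rho * p1) + b * rho') * (c * rho + e * (rho' * q2)) -
                (a * rho + b * (rho' * q2)) * (c * (rho * p1) + e * rho')).
    ring.
  by rewrite -Q1 -Q2 -Q3 -Q4 mulr1 mul0r subr0.
have Xint : p1 * q2 - 1 \is a Num.int.
  by apply: rpredB; [apply: rpredM; [exact: p1int|exact: q2int]|exact: rpred1].
have Yint : (a * e - b * c) * rho * rho' \is a Num.int.
  apply: rpredM => //; apply: rpredM => //.
  by apply: rpredB; apply: rpredM.
have Xabs := int_unit Yint Xint det.
have X1 : p1 * q2 - 1 = -1.
  have Xneg : p1 * q2 - 1 < 0 by rewrite subr_lt0 -subr_gt0.
  by move: Xabs; rewrite ltr0_norm // => /eqP; rewrite eqr_oppLR => /eqP.
have : p1 * q2 = 0 by move: X1 => /eqP; rewrite subr_eq addrC subrr => /eqP.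
move/eqP; rewrite mulf_eq0 => /orP [/eqP p10 | /eqP q20].
  left; apply/seteqP; split => z.
    move/(lin_x1 c1 Lv1 Mu1 sgb1 Lw1 Ht1 six) => h; apply/linXb.
    by rewrite -/N1 h -/p1 p10 mul0r.
  move/linXb; rewrite -/p1 p10 mul0r => h.
  by apply/(lin_x1 c1 Lv1 Mu1 sgb1 Lw1 Ht1 six).
right; apply/seteqP; split => z.
  move/(lin_x1 c1 Lv1 Mu1 sgb1 Lw1 Ht1 siy) => h; apply/linYb.
  by rewrite -/N1 h -/q2 q20 mul0r.
move/linYb; rewrite -/q2 q20 mul0r => h.
by apply/(lin_x1 c1 Lv1 Mu1 sgb1 Lw1 Ht1 siy).
Qed.

End Cube.

Local Close Scope classical_set_scope.

Theorem lemma3p6 (R : realType) (d : nat) (C : set 'rV[R]_d)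
  (L : {set 'I_d} -> {set 'I_d} -> set 'rV[R]_d) (x y : 'I_d) :
  (3 <= d)%N ->
  smooth C ->
  cube_labeling C L ->
  (forall (k : nat) (P : set 'rV[R]_k), (0 < k)%N -> (k < d)%N ->
     smooth P -> comb_cube P ->
     exists F G, facet P F /\ facet P G /\ F <> G /\ parallel F G) ->
  x != y ->
  parallel (L [set x; y] finset.set0) (L [set x] [set y]) ->
  parallel (L [set x; y] finset.set0) (L [set y] [set x]) ->
  parallel (L [set x; y] finset.set0) (L finset.set0 [set x; y]) ->
  parallel (L [set x] finset.set0) (L finset.set0 [set x]) \/
  parallel (L [set y] finset.set0) (L finset.set0 [set y]).
Proof.
move=> _ Hsm HL _ xy H1 H2 H3.
have [s [_ hs]] := Hsm.1.
exact: (final hs HL Hsm xy H1 H2 H3).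
Qed.
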